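(* In the zero-sum three-door Monty Hall game described in the context (value $V=2/3$), a mixed strategy $Q$ of Monte is minimax (i.e. $\max_P W(P,Q)=2/3$) if and only if $Q=Q^*_{\lambda_1,\lambda_2,\lambda_3}$ for some $\lambda_1,\lambda_2,\lambda_3\in[0,1]$, where $Q^*_{\lambda_1,\lambda_2,\lambda_3}$ assigns to the pure strategies $(1,2),(1,3),(2,1),(2,3),(3,1),(3,2)$ the probabilities $\lambda_1/3,(1-\lambda_1)/3,\lambda_2/3,(1-\lambda_2)/3,\lambda_3/3,(1-\lambda_3)/3$ respectively; equivalently, iff $\theta$ is uniformly distributed on $\{1,2,3\}$ under $Q$.
   Context: Doors are numbered $1,2,3$. A pure strategy of Monte is a pair $(\theta,d)$ with $\theta\in\{1,2,3\}$ (the door hiding the prize) and $d\in\{1,2,3\}\setminus\{\theta\}$ (six strategies). A pure strategy of Conie is a triple $x\,a\,b$ with $x\in\{1,2,3\}$ and $a,b\in\{\mathrm{h},\mathrm{s}\}$ (twelve strategies). Under the profile $((\theta,d),x\,a\,b)$: Monte offers door $y=\theta$ if $x\neq\theta$ and $y=d$ if $x=\theta$; Conie's action is $a$ if $y$ is the smaller of the two doors in $\{1,2,3\}\setminus\{x\}$ and $b$ otherwise; her final choice is $z=x$ for action $\mathrm{h}$ and $z=y$ for action $\mathrm{s}$; she wins (payoff 1) iff $z=\theta$, else payoff 0; Monte's payoff is the negative. Mixed strategies are probability distributions on pure strategies, played independently; $W(P,Q)$ denotes the probability that Conie wins when Conie plays $P$ and Monte plays $Q$. A strategy $Q$ of Monte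 is minimax if $\max_P W(P,Q)=\min_{Q'}\max_P W(P,Q')$. *)

(* Defs.v *)
From HB Require Import structures.
From mathcomp Require Import all_boot all_order all_algebra.
From mathcomp Require Import classical_sets reals.
Set Implicit Arguments. Unset Strict Implicit. Unset Printing Implicit Defensive.
Import Order.TTheory GRing.Theory Num.Theory.
Local Open Scope ring_scope.
Local Open Scope classical_set_scope.

(* Doors 1,2,3 are represented by the ordinals 0,1,2 of 'I_3 (door k+1 <-> k). *)
Definition door := 'I_3.

Definition MPure := {p : door * door | p.1 != p.2}.

(* Pure strategies of Conie: triples (x, a, b); an action is a boolean,
   [false] = h (hold), [true] = s (switch). *)
Definition CPure := (door * bool * bool)%type.

Definition smaller_other (x : door) : door :=
  if x == ord0 then inord 1 else ord0.

Definition offered (m : MPure) (c : CPure) : door :=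
  let: (theta, d) := val m in
  let: (x, _, _) := c in
  if x != theta then theta else d.

Definition final (m : MPure) (c : CPure) : door :=
  let: (x, a, b) := c in
  let y := offered m c in
  let act := if y == smaller_other x then a else b in
  if act then y else x.

Definition wins (m : MPure) (c : CPure) : bool := final m c == (val m).1.

Definition is_mixed (R : numDomainType) (T : finType) (P : {ffun T -> R}) :=
  (forall t, 0 <= P t) /\ \sum_t P t = 1.

Definition W (R : numDomainType) (P : {ffun CPure -> R}) (Q : {ffun MPure -> R}) : R :=
  \sum_(c : CPure) \sum_(m : MPure) P c * Q m * (wins m c)%:R.

Definition maxW (R : realType) (Q : {ffun MPure -> R}) : R :=
  sup [set W P Q | P in [set P : {ffun CPure -> R} | is_mixed P]].

Definition minimax (R : realType) (Q : {ffun MPure -> R}) : Prop :=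
  is_mixed Q /\ forall Q' : {ffun MPure -> R}, is_mixed Q' -> maxW Q <= maxW Q'.

Definition Qstar (R : numFieldType) (l1 l2 l3 : R) : {ffun MPure -> R} :=
  [ffun m : MPure =>
     match nat_of_ord (val m).1, nat_of_ord (val m).2 with
     | 0%N, 1%N => l1 / 3
     | 0%N, _   => (1 - l1) / 3
     | 1%N, 0%N => l2 / 3
     | 1%N, _   => (1 - l2) / 3
     | _, 0%N   => l3 / 3
     | _, _     => (1 - l3) / 3
     end].

Definition theta_uniform (R : numFieldType) (Q : {ffun MPure -> R}) : Prop :=
  forall t : door, \sum_(m : MPure | (val m).1 == t) Q m = 1 / 3.

(* Main.v *)
Require Import Defs.
From HB Require Import structures.
From mathcomp Require Import all_boot all_order all_algebra.
From mathcomp Require Import classical_sets reals.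
From mathcomp Require Import lra.
Set Implicit Arguments. Unset Strict Implicit. Unset Printing Implicit Defensive.
Import Order.TTheory GRing.Theory Num.Theory.
Local Open Scope ring_scope.

Definition d0 : door := @Ordinal 3 0 isT.
Definition d1 : door := @Ordinal 3 1 isT.
Definition d2 : door := @Ordinal 3 2 isT.
Definition m01 : MPure := exist _ (d0, d1) isT.
Definition m02 : MPure := exist _ (d0, d2) isT.
Definition m10 : MPure := exist _ (d1, d0) isT.
Definition m12 : MPure := exist _ (d1, d2) isT.
Definition m20 : MPure := exist _ (d2, d0) isT.
Definition m21 : MPure := exist _ (d2, d1) isT.

Lemma door_cases (x : door) : [\/ x = d0, x = d1 | x = d2].
Proof.
case: x => [[|[|[|n]]] Hn]; [apply: Or31|apply: Or32|apply: Or33|by []];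
  by apply: val_inj.
Qed.

Lemma mcases (m : MPure) :
  m = m01 \/ m = m02 \/ m = m10 \/ m = m12 \/ m = m20 \/ m = m21.
Proof.
case: m => [[i j]].
case: (door_cases i) => ->; case: (door_cases j) => -> h;
  try (by []);
  rewrite /m01 /m02 /m10 /m12 /m20 /m21;
  [left|right;left|right;right;left|right;right;right;left|
   right;right;right;right;left|right;right;right;right;right];
  congr exist; apply: eq_irrelevance.
Qed.



Lemma sumM (R : numDomainType) (F : MPure -> R) :
  \sum_m F m = F m01 + F m02 + F m10 + F m12 + F m20 + F m21.
Proof.
rewrite (bigD1 m01) //= (bigD1 m02) //= (bigD1 m10) //= (bigD1 m12) //=
  (bigD1 m20) //= (bigD1 m21) //= big1 ?addr0 ?addrA //.
move=> m; case: (mcases m) => [|[|[|[|[|]]]]] ->; by rewrite ?eqxx ?andbF.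
Qed.


Lemma inord1E : inord 1 = d1 :> door.
Proof. by apply: val_inj; rewrite /= inordK. Qed.
Lemma dneq01 : (d0 == d1) = false. Proof. by []. Qed.
Lemma dneq02 : (d0 == d2) = false. Proof. by []. Qed.
Lemma dneq10 : (d1 == d0) = false. Proof. by []. Qed.
Lemma dneq12 : (d1 == d2) = false. Proof. by []. Qed.
Lemma dneq20 : (d2 == d0) = false. Proof. by []. Qed.
Lemma dneq21 : (d2 == d1) = false. Proof. by []. Qed.

Definition w (R : numDomainType) (Q : {ffun MPure -> R}) (c : CPure) : R :=
  \sum_m Q m * (wins m c)%:R.

Ltac evw := rewrite /w !sumM /wins /final /offered /smaller_other /= ?inord1E
  ?dneq01 ?dneq02 ?dneq10 ?dneq12 ?dneq20 ?dneq21 ?eqxx /= ?mulr1 ?mulr0 ?add0r ?addr0.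


Section S.
Variable R : realType.
Implicit Types (Q : {ffun MPure -> R}) (P : {ffun CPure -> R}).

Lemma W_w P Q : W P Q = \sum_c P c * w Q c.
Proof.
rewrite /W; apply: eq_bigr => c _; rewrite /w mulr_sumr.
by apply: eq_bigr => m _; rewrite mulrA.
Qed.

Lemma w_le1 Q c : is_mixed Q -> w Q c <= 1.
Proof.
case=> Q0 Q1; rewrite -Q1 /w; apply: ler_sum => m _.
by case: (wins m c); rewrite ?mulr1 ?mulr0.
Qed.

Lemma W_le P Q B : is_mixed P -> (forall c, w Q c <= B) -> W P Q <= B.
Proof.
case=> P0 P1 H; rewrite W_w (@le_trans _ _ (\sum_c P c * B)) //.
  by apply: ler_sum => c _; apply: ler_wpM2l.
by rewrite -mulr_suml P1 mul1r.
Qed.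

Definition delta (c : CPure) : {ffun CPure -> R} := [ffun c' => ((c' == c)%:R : R)].

Lemma delta_mixed c : is_mixed (delta c).
Proof.
split=> [t|]; first by rewrite ffunE ler0n.
rewrite (bigD1 c) //= ffunE eqxx big1 ?addr0 // => t /negbTE ht.
by rewrite ffunE ht.
Qed.

Lemma W_delta c Q : W (delta c) Q = w Q c.
Proof.
rewrite W_w (bigD1 c) //= ffunE eqxx mul1r big1 ?addr0 // => t /negbTE ht.
by rewrite ffunE ht mul0r.
Qed.

Lemma maxW_le Q B : (forall c, w Q c <= B) -> maxW Q <= B.
Proof.
move=> H; apply: ge_sup.
  exists (W (delta (d0, true, true)) Q); exists (delta (d0, true, true)) => //.
  exact: delta_mixed.
by move=> y [P HP <-]; apply: W_le.
Qed.

Lemma maxW_ge Q c : is_mixed Q -> w Q c <= maxW Q.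
Proof.
move=> HQ; apply: ub_le_sup.
  exists 1 => y [P HP <-]; apply: W_le => // c'; exact: w_le1.
by exists (delta c); [exact: delta_mixed | exact: W_delta].
Qed.

Lemma mixed_eqs Q : is_mixed Q ->
  [/\ 0 <= Q m01, 0 <= Q m02, 0 <= Q m10 & 0 <= Q m12] /\ [/\ 0 <= Q m20, 0 <= Q m21 &
   Q m01 + Q m02 + Q m10 + Q m12 + Q m20 + Q m21 = 1].
Proof. by case=> H0 H1; do 2 split => //; rewrite -sumM. Qed.

Lemma unif_eqs Q : theta_uniform Q <->
  [/\ Q m01 + Q m02 = 1/3, Q m10 + Q m12 = 1/3 & Q m20 + Q m21 = 1/3].
Proof.
have E t : \sum_(m : MPure | (val m).1 == t) Q m =
   \sum_m (if (val m).1 == t then Q m else 0) by rewrite big_mkcond.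
split.
  move=> H; move: (H d0) (H d1) (H d2); rewrite !E !sumM /=
   ?dneq01 ?dneq02 ?dneq10 ?dneq12 ?dneq20 ?dneq21 ?eqxx /= ?add0r ?addr0.
  by move=> -> -> ->.
case=> H0 H1 H2 t; rewrite E sumM.
case: (door_cases t) => -> /=;
  rewrite ?dneq01 ?dneq02 ?dneq10 ?dneq12 ?dneq20 ?dneq21 ?eqxx /= ?add0r ?addr0 //.
Qed.

Lemma exists_big Q : is_mixed Q -> exists c, 2/3 <= w Q c.
Proof.
move=> /mixed_eqs [[? ? ? ?] [? ? H]].
have e0 : w Q (d0, true, true) = Q m10 + Q m12 + Q m20 + Q m21 by evw.
have e1 : w Q (d1, true, true) = Q m01 + Q m02 + Q m20 + Q m21 by evw.
have e2 : w Q (d2, true, true) = Q m01 + Q m02 + Q m10 + Q m12 by evw.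
case: (lerP (2/3) (w Q (d0, true, true))) => h0; first by exists (d0,true,true).
case: (lerP (2/3) (w Q (d1, true, true))) => h1; first by exists (d1,true,true).
exists (d2, true, true); lra.
Qed.

Lemma w_unif Q c : is_mixed Q -> theta_uniform Q -> w Q c <= 2/3.
Proof.
move=> /mixed_eqs [[? ? ? ?] [? ? H]] /unif_eqs [U0 U1 U2].
case: c => [[x a] b]; case: (door_cases x) => ->; case: a; case: b; evw; lra.
Qed.

Lemma maxW_ge23 Q : is_mixed Q -> 2/3 <= maxW Q.
Proof.
move=> HQ; case: (exists_big HQ) => c hc; apply: (le_trans hc); exact: maxW_ge.
Qed.

Lemma maxW_unif Q : is_mixed Q -> theta_uniform Q -> maxW Q = 2/3.
Proof.
move=> HQ HU; apply/eqP; rewrite eq_le maxW_ge23 // andbT.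
by apply: maxW_le => c; apply: w_unif.
Qed.

Lemma unif_maxW Q : is_mixed Q -> maxW Q = 2/3 -> theta_uniform Q.
Proof.
move=> HQ HM.
have h0 := maxW_ge (d0, true, true) HQ; have h1 := maxW_ge (d1, true, true) HQ.
have h2 := maxW_ge (d2, true, true) HQ.
move: h0 h1 h2; rewrite HM; move/mixed_eqs: HQ => [[? ? ? ?] [? ? H]].
evw => h0 h1 h2; apply/unif_eqs; split; lra.
Qed.

Lemma Qstar_eqs (l1 l2 l3 : R) :
  [/\ Qstar l1 l2 l3 m01 = l1/3, Qstar l1 l2 l3 m02 = (1-l1)/3 &
      Qstar l1 l2 l3 m10 = l2/3] /\ [/\ Qstar l1 l2 l3 m12 = (1-l2)/3,
      Qstar l1 l2 l3 m20 = l3/3 & Qstar l1 l2 l3 m21 = (1-l3)/3].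
Proof. by rewrite !ffunE. Qed.

Definition Q0 : {ffun MPure -> R} := Qstar (1/2) (1/2) (1/2).

Lemma Q0_mixed : is_mixed Q0.
Proof.
have [[e1 e2 e3] [e4 e5 e6]] := Qstar_eqs (1/2 : R) (1/2) (1/2).
split.
  by move=> m; case: (mcases m) => [|[|[|[|[|]]]]] ->;
    rewrite /Q0 ?e1 ?e2 ?e3 ?e4 ?e5 ?e6; lra.
rewrite sumM /Q0 e1 e2 e3 e4 e5 e6; lra.
Qed.

Lemma Q0_unif : theta_uniform Q0.
Proof.
have [[e1 e2 e3] [e4 e5 e6]] := Qstar_eqs (1/2 : R) (1/2) (1/2).
apply/unif_eqs; rewrite /Q0 e1 e2 e3 e4 e5 e6; split; lra.
Qed.

End S.

Theorem mainTheorem7 (R : realType) (Q : {ffun MPure -> R}) :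
  is_mixed Q ->
  (minimax Q <-> maxW Q = 2 / 3) /\
  (minimax Q <->
     exists l1 l2 l3 : R,
       [/\ 0 <= l1 <= 1, 0 <= l2 <= 1, 0 <= l3 <= 1 & Q = Qstar l1 l2 l3]) /\
  (minimax Q <-> theta_uniform Q).
Proof.
move=> HQ.
have A : minimax Q <-> maxW Q = 2/3.
  split.
    case=> _ H; apply/eqP; rewrite eq_le maxW_ge23 // andbT.
    by rewrite -(maxW_unif (@Q0_mixed R) (@Q0_unif R)); apply: H; apply: Q0_mixed.
  move=> HM; split => // Q' HQ'; rewrite HM; exact: maxW_ge23.
have B : minimax Q <-> theta_uniform Q.
  split; first by move/A; apply: unif_maxW.
  by move=> HU; apply/A; apply: maxW_unif.
split => //; split => //.
split.
  move/B/unif_eqs => [U0 U1 U2]; move/mixed_eqs: HQ => [[? ? ? ?] [? ? H]].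
  exists (3 * Q m01), (3 * Q m10), (3 * Q m20).
  split; [apply/andP; split; lra|apply/andP; split; lra|apply/andP; split; lra|].
  apply/ffunP => m.
  have [[e1 e2 e3] [e4 e5 e6]] := Qstar_eqs (3 * Q m01) (3 * Q m10) (3 * Q m20).
  case: (mcases m) => [|[|[|[|[|]]]]] ->;
    rewrite ?e1 ?e2 ?e3 ?e4 ?e5 ?e6; lra.
case=> l1 [l2 [l3 [_ _ _ EQ]]]; apply/B; rewrite EQ.
have [[e1 e2 e3] [e4 e5 e6]] := Qstar_eqs l1 l2 l3.
apply/unif_eqs; rewrite e1 e2 e3 e4 e5 e6; split; lra.
Qed.
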